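(* Assume the transversality condition holds at $(t^*,\bm x^* )\in I\times S$, and that PWS solutions $\bm x(t;\bm y,s)$ are Lipschitz continuous in the initial data. Then there exists $\epsilon>0$ such that for all $\bm y\in K^\epsilon_-:=\bar B_\epsilon(\bm x^* )\cap S$ and $(t,s)\in J^\epsilon_-:=\{(t,s)\in[t^*-\epsilon,t^*]^2: t<s\}$, the trajectory $\bm x(t;\bm y,s)$ has no transition in $[t^*-\epsilon,s)$. Furthermore, let $$M^\epsilon_-=\tfrac12\sup_{(t,s)\in J^\epsilon_-,\ \bm y\in K^\epsilon_-}\big|\dot{\bm x}(t)\cdot H_g(\bm x(t))\dot{\bm x}(t)+\nabla g(\bm x(t))\cdot\ddot{\bm x}(t)\big|,$$ with $\bm x(t)=\bm x(t;\bm y,s)$. If $\max\big(t^*-\epsilon-s,\ -\alpha_S^2/M^\epsilon_-\big)<t-s<0$, then $g(\bm x(t;\bm y,s))<0$.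
   Context: Setting: $I$ bounded open interval, $U\subset\mathbb R^d$ bounded open, switching function $g\in C^2$ with $\nabla g\ne0$, $S=\{g=0\}$, $U_\pm=\{\pm g>0\}$; PWS system $\dot{\bm x}=\bm f_\pm(t,\bm x)$ on $U_\pm$, $\bm f_\pm\in C^1(I\times(U_\pm\cup S)\to\mathbb R^d)$. Transversality: nonzero $\alpha_S$ with $\nabla g(\bm x^* )\cdot\bm f_\pm(t^*,\bm x^* )\ge\alpha_S^2$ on $I\times S$. Solutions satisfy (H1) finitely many transition times; (H2) one-sided limits of $\dot{\bm x}$ at a transition equal $\bm f_\pm$ on the side in $U_\pm$; (H3) $\bm x$ is $C^2$ with bounded $\ddot{\bm x}$ away from transitions. $\bm x(t;\bm y,s)$ denotes the PWS solution with $\bm x(s)=\bm y$ (for $\bm y\in S$ and $t<s$ it evolves backward by $\bm f_-$). $H_g$ is the Hessian of $g$. *)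

(* Defs.v *)
From HB Require Import structures.
From mathcomp Require Import all_boot all_order all_algebra.
From mathcomp Require Import all_classical all_reals all_analysis.
Set Implicit Arguments. Unset Strict Implicit. Unset Printing Implicit Defensive.
Import Order.TTheory GRing.Theory Num.Theory.
Import numFieldNormedType.Exports.
Local Open Scope classical_set_scope.
Local Open Scope ring_scope.

Section PWS.
Context {R : realType} {d : nat}.
Local Notation vec := 'rV[R]_d.

Definition dotv (u v : vec) : R := \sum_(i < d) u ord0 i * v ord0 i.

Definition ev (i : 'I_d) : vec := delta_mx 0 i.

Definition grad (g : vec -> R) (x : vec) : vec := \row_i 'D_(ev i) g x.
Definition hess (g : vec -> R) (x : vec) : 'M[R]_d :=
  \matrix_(i, j) 'D_(ev j) ('D_(ev i) g) x.

Definition C2_on (U : set vec) (g : vec -> R) : Prop :=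
  forall x, U x ->
    [/\ {for x, continuous g},
        forall i, derivable g x (ev i) /\ {for x, continuous ('D_(ev i) g)} &
        forall i j, derivable ('D_(ev i) g) x (ev j) /\
                    {for x, continuous ('D_(ev j) ('D_(ev i) g))}].

Definition C1_on (O : set (R * vec)) (F : R * vec -> vec) : Prop :=
  forall p, O p ->
    [/\ {for p, continuous F},
        derivable F p (1, 0) /\ {for p, continuous ('D_(1, 0) F)} &
        forall i, derivable F p (0, ev i) /\ {for p, continuous ('D_(0, ev i) F)}].

(* f : I x D -> R^d is C^1 on I x D (D not necessarily open): it is the
   restriction to I x D of a C^1 function on an open neighbourhood of I x D. *)
Definition C1_on_closure (I : set R) (D : set vec) (f : R -> vec -> vec) : Prop :=
  exists (O : set (R * vec)) (F : R * vec -> vec),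
    [/\ open O, (forall t x, I t -> D x -> O (t, x)), C1_on O F &
        forall t x, I t -> D x -> F (t, x) = f t x].

Definition Ssurf (U : set vec) (g : vec -> R) : set vec := [set x | U x /\ g x = 0].
Definition Uplus (U : set vec) (g : vec -> R) : set vec := [set x | U x /\ 0 < g x].
Definition Uminus (U : set vec) (g : vec -> R) : set vec := [set x | U x /\ g x < 0].

Definition transitions (I : set R) (U : set vec) (g : vec -> R) (x : R -> vec) : set R :=
  [set t | I t /\ Ssurf U g (x t)].

Definition pws_solution (I : set R) (U : set vec) (g : vec -> R)
    (fp fm : R -> vec -> vec) (x : R -> vec) : Prop :=
  let T := transitions I U g x in
  [/\
      forall t, I t -> U (x t) /\ {for t, continuous x},
      forall t, I t -> ~ T t ->
        derivable x t 1 /\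
        ((Uplus U g (x t) -> derive1 x t = fp t (x t)) /\
         (Uminus U g (x t) -> derive1 x t = fm t (x t))),
      finite_set T,
      (forall tau, T tau ->
        [/\ (\forall t \near tau^'-, Uplus U g (x t)) ->
              derive1 x t @[t --> tau^'-] --> fp tau (x tau),
            (\forall t \near tau^'-, Uminus U g (x t)) ->
              derive1 x t @[t --> tau^'-] --> fm tau (x tau),
            (\forall t \near tau^'+, Uplus U g (x t)) ->
              derive1 x t @[t --> tau^'+] --> fp tau (x tau) &
            (\forall t \near tau^'+, Uminus U g (x t)) ->
              derive1 x t @[t --> tau^'+] --> fm tau (x tau)]) &
      (forall t, I t -> ~ T t ->
         derivable (derive1 x) t 1 /\ {for t, continuous (derive1 (derive1 x))}) /\
      (exists B : R, forall t, I t -> ~ T t -> `|derive1 (derive1 x) t| <= B)].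

Definition second_deriv_g (g : vec -> R) (x : R -> vec) (t : R) : R :=
  dotv (derive1 x t) (derive1 x t *m (hess g (x t))^T) + dotv (grad g (x t)) (derive1 (derive1 x) t).

End PWS.

(* Main.v *)
From HB Require Import structures.
From mathcomp Require Import all_boot all_order all_algebra.
From mathcomp Require Import all_classical all_reals all_analysis.
From mathcomp Require Import ring lra.
Require Import Defs.
Import Order.TTheory GRing.Theory Num.Theory.
Import numFieldNormedType.Exports.
Local Open Scope classical_set_scope.
Local Open Scope ring_scope.

Section Helpers.
Context {R : realType} {d : nat}.

Lemma mxnorm_entry m n (M : 'M[R]_(m, n)) i j : `|M i j| <= `|M|.
Proof.
rewrite [leRHS]/Num.Def.normr /= mx_normrE.
by apply: le_trans; last exact: (le_bigmax _ _ (i, j)).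
Qed.

Lemma mxnorm_le m n (M : 'M[R]_(m, n)) e : 0 <= e ->
  (forall i j, `|M i j| <= e) -> `|M| <= e.
Proof.
move=> e0 H; rewrite [leLHS]/Num.Def.normr /= mx_normrE.
by apply: bigmax_le => // -[i j] _; exact: H.
Qed.

Lemma line_is_derive (g : 'rV[R]_d -> R) p v t :
  derivable g (p + t *: v) v ->
  is_derive t 1 (fun u => g (p + u *: v)) ('D_v g (p + t *: v)).
Proof.
move=> dg.
have E : (fun h : R => h^-1 *: (((fun u => g (p + u *: v)) \o shift t) (h *: 1)
            - g (p + t *: v))) =
         (fun h : R => h^-1 *: ((g \o shift (p + t *: v)) (h *: v) - g (p + t *: v))).
  apply: funext => h /=; congr (_ *: (g _ - _)).
  by rewrite /= [h *: 1]mulr1 scalerDl addrCA addrC.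
split.
  by rewrite /derivable E.
by rewrite /derive E.
Qed.

Lemma line_mvt (g : 'rV[R]_d -> R) p v h :
  (forall t, Num.min 0 h <= t <= Num.max 0 h ->
     derivable g (p + t *: v) v /\ {for p + t *: v, continuous g}) ->
  exists t, Num.min 0 h <= t <= Num.max 0 h /\
     g (p + h *: v) - g p = h * 'D_v g (p + t *: v).
Proof.
move=> H.
have cl : continuous (fun u : R => p + u *: v).
  change (continuous ((fun=> p) + (fun u : R => u *: v))).
  by move=> u; apply: continuousD; [exact: cst_continuous|exact: scalel_continuous].
have fc t : Num.min 0 h <= t <= Num.max 0 h ->
    {for t, continuous (fun u : R => g (p + u *: v))}.
  move=> /H [_ gc]; exact: (@continuous_comp _ _ _ (fun u : R => p + u *: v) g t (cl t) gc).
have [h0|h0] := leP 0 h.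
  have D1 : forall x, x \in `]0, h[ ->
      is_derive x 1 (fun u : R => g (p + u *: v)) ('D_v g (p + x *: v)).
    move=> x; rewrite in_itv /= => /andP[x0 xh].
    apply: line_is_derive; apply: (fun hx => proj1 (H x hx)).
    by rewrite (min_l h0) (max_r h0) !ltW.
  have C1 : {within `[0, h], continuous (fun u : R => g (p + u *: v))}.
    apply: continuous_in_subspaceT => x; rewrite inE /= in_itv /= => xI.
    by apply: fc; rewrite (min_l h0) (max_r h0).
  have [c cI E] := MVT_segment h0 D1 C1.
  exists c; split.
    by move: cI; rewrite in_itv.
  by move: E; rewrite scale0r addr0 subr0 mulrC.
have h0' : h <= 0 by exact: ltW.
have D1 : forall x, x \in `]h, 0[ ->
    is_derive x 1 (fun u : R => g (p + u *: v)) ('D_v g (p + x *: v)).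
  move=> x; rewrite in_itv /= => /andP[x0 xh].
  apply: line_is_derive; apply: (fun hx => proj1 (H x hx)).
  by rewrite (min_r h0') (max_l h0') !ltW.
have C1 : {within `[h, 0], continuous (fun u : R => g (p + u *: v))}.
  apply: continuous_in_subspaceT => x; rewrite inE /= in_itv /= => xI.
  by apply: fc; rewrite (min_r h0') (max_l h0').
have [c cI E] := MVT_segment h0' D1 C1.
exists c; split.
  by move: cI; rewrite in_itv.
move: E; rewrite scale0r addr0 sub0r mulrN mulrC => E.
by apply: oppr_inj; rewrite opprB E.
Qed.

Definition inbox (z y w : 'rV[R]_d) := forall j,
  (z ord0 j <= w ord0 j <= y ord0 j) \/ (y ord0 j <= w ord0 j <= z ord0 j).

Lemma inbox1 (a b w : R) : (a <= b -> a <= w <= b) -> (b <= a -> b <= w <= a) ->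
  (a <= w <= b) \/ (b <= w <= a).
Proof. by case: (leP a b) => ab H1 H2; [left; exact: H1|right; apply: H2; exact: ltW]. Qed.

Lemma coord_decomp (g : 'rV[R]_d -> R) z y :
  (forall w, inbox z y w -> (forall k, derivable g w (ev k)) /\ {for w, continuous g}) ->
  exists xi : 'I_d -> 'rV[R]_d, (forall k, inbox z y (xi k)) /\
    g y - g z = \sum_(k < d) (y ord0 k - z ord0 k) * 'D_(ev k) g (xi k).
Proof.
move=> H.
pose Q (k : nat) := \row_(j < d) (if (j < k)%N then y ord0 j else z ord0 j).
have Q0 : Q 0%N = z by apply/rowP => j; rewrite mxE.
have Qd : Q d = y by apply/rowP => j; rewrite mxE ltn_ord.
have QS (k : 'I_d) t j : (Q k + t *: ev k) ord0 j =
    if (j < k)%N then y ord0 j else if j == k then z ord0 j + t else z ord0 j.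
  rewrite !mxE /=.
  have [jk|jk|jk] := ltngtP j k.
  - have -> : (j == k) = false by apply/negbTE; rewrite neq_ltn jk.
    by rewrite mulr0 addr0.
  - have -> : (j == k) = false by apply/negbTE; rewrite neq_ltn jk orbT.
    by rewrite mulr0 addr0.
  - have -> : j = k by apply: val_inj.
    by rewrite eqxx mulr1.
have QS1 (k : 'I_d) : Q k.+1 = Q k + (y ord0 k - z ord0 k) *: ev k.
  apply/rowP => j; rewrite QS mxE ltnS leq_eqVlt.
  case: (ltngtP j k) => [jk|jk|jk].
  - by rewrite orbT.
  - have -> : (j == k) = false by apply/negbTE; rewrite neq_ltn jk orbT.
    by [].
  - have -> : j = k by apply: val_inj.
    by rewrite !eqxx /= addrC subrK.
have step (k : 'I_d) : exists xi, inbox z y xi /\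
    g (Q k.+1) - g (Q k) = (y ord0 k - z ord0 k) * 'D_(ev k) g xi.
  set h := y ord0 k - z ord0 k.
  have box t : Num.min 0 h <= t <= Num.max 0 h -> inbox z y (Q k + t *: ev k).
    move=> ht j; rewrite QS.
    have ht' : (0 <= h -> 0 <= t <= h) /\ (h <= 0 -> h <= t <= 0).
      by split => h0; move: ht; [rewrite (min_l h0) (max_r h0)|rewrite (min_r h0) (max_l h0)].
    case: ifP => _; first by apply: inbox1 => H0; rewrite H0 lexx ?andbT.
    case: ifP => [/eqP ->|_]; last by apply: inbox1 => H0; rewrite H0 lexx ?andbT.
    apply: inbox1 => zy.
      have /andP[] := ht'.1 (ltac:(by rewrite subr_ge0)).
      rewrite /h => t0 th; apply/andP; split; lra.
    have /andP[] := ht'.2 (ltac:(by rewrite subr_le0)).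
    rewrite /h => t0 th; apply/andP; split; lra.
  have [t [ht E]] := @line_mvt g (Q k) (ev k) h (fun t ht =>
      let: conj d1 d2 := H _ (box t ht) in conj (d1 k) d2).
  exists (Q k + t *: ev k); split; first exact: box.
  by rewrite QS1 E.
have /fin_all_exists [xi Hxi] := step.
exists xi; split; first by move=> k; case: (Hxi k).
have -> : g y - g z = g (Q d) - g (Q 0%N) by rewrite Qd Q0.
rewrite -(@telescope_sumr _ 0 d (fun k => g (Q k)) (leq0n d)) big_mkord.
by apply: eq_bigr => k _; case: (Hxi k).
Qed.

Lemma pos_sum (A B : 'I_d -> R) c : 0 < c -> c <= \sum_(k < d) B k * A k ->
  exists2 eta, 0 < eta & forall a b : 'I_d -> R,
    (forall k, `|a k - A k| <= eta) -> (forall k, `|b k - B k| <= eta) ->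
    0 < \sum_(k < d) b k * a k.
Proof.
move=> c0 cS.
pose S := \sum_(k < d) (`|A k| + `|B k| + 1).
have S0 : 0 <= S by apply: sumr_ge0 => k _; rewrite addr_ge0 // addr_ge0.
pose eta := Num.min 1 (c / (S + 1)).
have S10 : 0 < S + 1 by rewrite ltr_wpDl.
have eta0 : 0 < eta by rewrite lt_min ltr01 divr_gt0.
have eta1 : eta <= 1 by rewrite ge_min lexx.
have etac : eta <= c / (S + 1) by rewrite ge_min lexx orbT.
exists eta => // a b ha hb.
have t1 x y : `|y| <= eta -> - (x * y) <= `|x| * eta.
  move=> hy; apply: le_trans (ler_norm _) _; rewrite normrN normrM.
  exact: ler_wpM2l.
have term k : B k * A k - b k * a k <= eta * (`|A k| + `|B k| + 1).
  have -> : B k * A k - b k * a k =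
      - (B k * (a k - A k)) + - (A k * (b k - B k)) + - ((b k - B k) * (a k - A k)).
    ring.
  have h1 := t1 (B k) _ (ha k).
  have h2 := t1 (A k) _ (hb k).
  have h3 := t1 (b k - B k) _ (ha k).
  have h4 : `|b k - B k| * eta <= eta * 1.
    rewrite mulrC; apply: ler_wpM2l; [exact: ltW | exact: le_trans (hb k) eta1].
  have h5 : 0 <= eta by exact: ltW.
  rewrite mulrDr mulrDr; lra.
have key : \sum_(k < d) B k * A k - \sum_(k < d) b k * a k <= eta * S.
  rewrite -sumrB /S mulr_sumr; apply: ler_sum => k _; exact: term.
have etaS : eta * S < c.
  apply: le_lt_trans (_ : c / (S + 1) * S < c).
    by apply: ler_wpM2r.
  rewrite -mulrA gtr_pMr // mulrC ltr_pdivrMr // mul1r; lra.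
lra.
Qed.

Lemma coord_mvt (x : R -> 'rV[R]_d) u1 u2 k : u1 < u2 ->
  (forall t, u1 < t < u2 -> derivable x t 1) ->
  (forall t, u1 <= t <= u2 -> {for t, continuous x}) ->
  exists2 c, u1 < c < u2 &
    x u2 ord0 k - x u1 ord0 k = (derive1 x c) ord0 k * (u2 - u1).
Proof.
move=> u12 dx cx.
have D1 : forall t, t \in `]u1, u2[ ->
    is_derive t 1 (fun s => x s ord0 k) ((derive1 x t) ord0 k).
  move=> t; rewrite in_itv /= => /dx dxt.
  apply: DeriveDef; first by move/derivable_mxP : dxt; apply.
  by rewrite derive1E (derive_mx dxt) mxE.
have C1 : {within `[u1, u2], continuous (fun s => x s ord0 k)}.
  apply: continuous_in_subspaceT => t; rewrite inE /= in_itv /= => tI.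
  exact: (@continuous_comp _ _ _ x (fun M : 'rV[R]_d => M ord0 k) t (cx t tI)
           (@coord_continuous R 1 d ord0 k (x t))).
have [c cI E] := MVT u12 D1 C1.
by exists c => //; move: cI; rewrite in_itv.
Qed.

Lemma box_dist (c z y w rho : R) : (z <= w <= y) \/ (y <= w <= z) ->
  `|c - z| <= rho -> `|c - y| <= rho -> `|c - w| <= rho.
Proof.
rewrite !ler_norml => H /andP[h1 h2] /andP[h3 h4].
by case: H => /andP[h5 h6]; apply/andP; split; lra.
Qed.

Lemma entry_dist (u v : 'rV[R]_d) k : `|u ord0 k - v ord0 k| <= `|u - v|.
Proof. by have := @mxnorm_entry 1 d (u - v) ord0 k; rewrite !mxE. Qed.

Lemma core (a b : R) (U : set 'rV[R]_d) (g : 'rV[R]_d -> R)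
  (fp fm : R -> 'rV[R]_d -> 'rV[R]_d) (F : R * 'rV[R]_d -> 'rV[R]_d)
  (X : R -> 'rV[R]_d -> R -> 'rV[R]_d) (ts : R) (xs : 'rV[R]_d)
  (eps r C eta : R) (A B : 'I_d -> R) :
  (forall y s, `]a, b[%classic s -> U y ->
     pws_solution `]a, b[%classic U g fp fm (fun t => X t y s) /\ X s y s = y) ->
  (forall y s, `]a, b[%classic s -> Ssurf U g y ->
     \forall t \near s^'-, Uminus U g (X t y s)) ->
  (forall x, U x -> {for x, continuous g}) ->
  (forall t x, `]a, b[%classic t -> Uminus U g x -> F (t, x) = fm t x) ->
  0 < eps -> a < ts - eps -> ts < b -> 0 <= C -> (C + 1) * eps < r ->
  (forall t x k, ts - eps <= t <= ts -> `|xs - x| < r ->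
     `|F (t, x) ord0 k - A k| <= eta /\ `|F (t, x) ord0 k| <= C) ->
  (forall x, `|xs - x| < r -> U x) ->
  (forall x k, `|xs - x| < r ->
     [/\ U x, derivable g x (ev k), {for x, continuous g} &
         `|'D_(ev k) g x - B k| <= eta]) ->
  (forall a b : 'I_d -> R,
    (forall k, `|a k - A k| <= eta) -> (forall k, `|b k - B k| <= eta) ->
    0 < \sum_(k < d) b k * a k) ->
  forall y s, `|xs - y| <= eps -> U y -> g y = 0 -> ts - eps < s <= ts ->
  forall tau, ts - eps <= tau < s -> g (X tau y s) < 0.
Proof.
move=> hX hXback gcont hF eps0 aeps tsb C0 Cr hFA hgU hgB hpos y s hy Uy gy /andP[s1 s2]
  tau /andP[tau1 tau2].
have r0 : 0 < r by apply: le_lt_trans Cr; rewrite mulr_ge0 // ?addr_ge0 // ltW.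
have epsr : eps < r.
  have : 0 <= C * eps := mulr_ge0 C0 (ltW eps0).
  move: Cr; rewrite mulrDl mul1r; lra.
have sI : `]a, b[%classic s by rewrite /= in_itv /=; apply/andP; split; lra.
have [pws xss] := hX y s sI Uy.
set x := fun t => X t y s.
case: pws => hcont hode _ _ _.
pose good t := g (x t) < 0 /\ `|xs - x t| < r.
have openg t : `]a, b[%classic t -> good t -> \forall u \near t, good u.
  move=> tI [gt dt].
  have [Ut ct] := hcont t tI.
  have cg : {for t, continuous (g \o x)} := continuous_comp ct (gcont _ Ut).
  have h1 := cvgr_lt _ cg _ gt.
  have h2 := cvgr_dist_lt _ _ ct _ (_ : 0 < r - `|xs - x t|).
  near=> u; split.
    by near: u; exact: h1.
  have : `|x t - x u| < r - `|xs - x t|.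
    by near: u; apply: h2; rewrite subr_gt0.
  have := ler_distD (x t) xs (x u); lra.
have [Us cs] := hcont s sI.
have [e e0 He] : exists2 e, 0 < e & forall u, `|s - u| < e -> u < s -> good u.
  have hb := hXback y s sI (conj Uy gy).
  rewrite near_withinE in hb.
  have h2 := cvgr_dist_lt _ _ cs (r - eps) (ltac:(by rewrite subr_gt0)).
  have H : \forall u \near s, u < s -> good u.
    near=> u => us; split.
      have : u < s -> Uminus U g (X u y s) by near: u; exact: hb.
      by move=> /(_ us) [].
    have : `|X s y s - X u y s| < r - eps by near: u; exact: h2.
    rewrite xss => h; have := ler_distD y xs (X u y s); rewrite /x; lra.
  have /nbhs_ballP [e e0 He] := H.
  by exists e => // u su; apply: He; rewrite -ball_normE /=.
case: (pselect (good tau)) => [[] //|ntau]; exfalso.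
pose Bs := [set u | ts - eps <= u < s /\ ~ good u].
have Btau : Bs tau.
  by rewrite /Bs /=; split; [rewrite tau1 tau2 | exact: ntau].
have ubB : ubound Bs (s - e).
  move=> u [/andP[u1 u2] nu]; case: (leP u (s - e)) => // su; exfalso; apply: nu.
  have hu : `|s - u| < e by rewrite gtr0_norm ?subr_gt0 //; lra.
  exact: He hu u2.
have hsB : has_sup Bs by split; [exists tau | exists (s - e)].
set t0 := sup Bs.
have t0a : tau <= t0 := sup_upper_bound hsB Btau.
have t0b : t0 <= s - e := ge_sup (ex_intro _ tau Btau) ubB.
have t0I : `]a, b[%classic t0 by rewrite /= in_itv /=; apply/andP; split; lra.
have bad0 : ~ good t0.
  move=> g0; have /nbhs_ballP [e2 e20 He2] := openg t0 t0I g0.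
  have [u Bu ut] := sup_adherent e20 hsB.
  have uub : u <= t0 := sup_upper_bound hsB Bu.
  rewrite -/t0 in ut; apply: Bu.2; apply: He2; rewrite -ball_normE /= ger0_norm ?subr_ge0 //; lra.
have goodI u : t0 < u < s -> good u.
  move=> /andP[u1 u2]; case: (pselect (good u)) => // nu; exfalso.
  have Bu : Bs u by split => //; apply/andP; split; lra.
  have := sup_upper_bound hsB Bu; rewrite -/t0; lra.
have derU u : t0 < u < s ->
    [/\ `]a, b[%classic u, derivable x u 1 & derive1 x u = F (u, x u)].
  move=> hu; have uI : `]a, b[%classic u.
    by move: hu => /andP[u1 u2]; rewrite /= in_itv /=; apply/andP; split; lra.
  have [gu du] := goodI u hu.
  have [Uu _] := hcont u uI.
  have ntr : ~ transitions `]a, b[%classic U g x u.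
    by move=> [_ [_ g0]]; rewrite g0 ltxx in gu.
  have [dx [_ hm]] := hode u uI ntr.
  by split => //; rewrite hm ?hF //; split.
have t0s : t0 < s by lra.
have cm k : exists c, t0 < c < s /\
    y ord0 k - x t0 ord0 k = F (c, x c) ord0 k * (s - t0).
  have [c hc E] := @coord_mvt x t0 s k t0s (fun u hu => let: And3 _ h _ := derU u hu in h)
    (fun u hu => (hcont u (ltac:(move: hu => /andP[u1 u2];
        rewrite /= in_itv /=; apply/andP; split; lra))).2).
  exists c; split => //.
  have [_ _ Ed] := derU c hc.
  by move: E; rewrite Ed /x /= xss.
have /fin_all_exists [cc Hcc] := cm.
have ccw k : ts - eps <= cc k <= ts /\ `|xs - x (cc k)| < r.
  have [/andP[c1 c2] _] := Hcc k; have [_ ->] := goodI (cc k) (ltac:(by rewrite c1 c2)).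
  by split => //; apply/andP; split; lra.
have Ceps0 : 0 <= (C + 1) * eps by rewrite mulr_ge0 // ?addr_ge0 // ltW.
have yj j : `|xs ord0 j - y ord0 j| <= eps by apply: le_trans (entry_dist _ _ _) hy.
have dt0j j : `|xs ord0 j - x t0 ord0 j| <= (C + 1) * eps.
  have h1 := ler_distD (y ord0 j) (xs ord0 j) (x t0 ord0 j).
  have [_ E] := Hcc j.
  have h2 : `|y ord0 j - x t0 ord0 j| <= C * eps.
    have st : 0 <= s - t0 by rewrite subr_ge0 ltW.
    rewrite E normrM (ger0_norm st).
    have [ccj ccr] := ccw j.
    apply: ler_pM => //; first exact: (hFA _ _ j ccj ccr).2.
    lra.
  have := yj j; rewrite mulrDl mul1r; lra.
have dt0 : `|xs - x t0| <= (C + 1) * eps.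
  apply: mxnorm_le => // i j; rewrite (ord1 i) !mxE; exact: dt0j.
have g0 : 0 <= g (x t0).
  rewrite leNgt; apply/negP => gl; apply: bad0; split => //; lra.
have inr w : inbox (x t0) y w -> `|xs - w| < r.
  move=> hw; apply: le_lt_trans Cr; apply: mxnorm_le => // i j.
  rewrite (ord1 i) !mxE; apply: box_dist (hw j) (dt0j j) _.
  apply: le_trans (yj j) _; have : 0 <= C * eps := mulr_ge0 C0 (ltW eps0).
  rewrite mulrDl mul1r; lra.
have [xi [hxi E]] := @coord_decomp g (x t0) y (fun w hw =>
   conj (fun k => let: And4 _ h _ _ := hgB w k (inr w hw) in h)
        (gcont w (hgU w (inr w hw)))).
have pos := hpos (fun k => F (cc k, x (cc k)) ord0 k) (fun k => 'D_(ev k) g (xi k))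
  (fun k => let: conj c1 c2 := ccw k in (hFA _ _ k c1 c2).1)
  (fun k => let: And4 _ _ _ h := hgB (xi k) k (inr _ (hxi k)) in h).
have E2 : g y - g (x t0) = (s - t0) *
    \sum_(k < d) 'D_(ev k) g (xi k) * F (cc k, x (cc k)) ord0 k.
  rewrite E mulr_sumr; apply: eq_bigr => k _; have [_ ->] := Hcc k; ring.
have := mulr_gt0 (ltac:(by rewrite subr_gt0) : 0 < s - t0) pos.
rewrite -E2 gy; lra.
Unshelve. all: by end_near.
Qed.
End Helpers.

Theorem lemmaB2 (R : realType) (d : nat)
  (* bounded open time interval I = ]a, b[ *)
  (a b : R) (hab : a < b)
  (* bounded open state space U *)
  (U : set 'rV[R]_d) (hUo : open U) (hUb : bounded_set U)
  (* switching function *)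
  (g : 'rV[R]_d -> R) (hg : C2_on U g) (hgrad : forall x, U x -> grad g x != 0)
  (* vector fields *)
  (fp fm : R -> 'rV[R]_d -> 'rV[R]_d)
  (hfp : C1_on_closure `]a, b[%classic (Uplus U g `|` Ssurf U g) fp)
  (hfm : C1_on_closure `]a, b[%classic (Uminus U g `|` Ssurf U g) fm)
  (* transversality on I x S *)
  (alphaS : R) (halpha : alphaS != 0)
  (htrans : forall t x, `]a, b[%classic t -> Ssurf U g x ->
     alphaS ^+ 2 <= dotv (grad g x) (fp t x) /\
     alphaS ^+ 2 <= dotv (grad g x) (fm t x))
  (* the PWS solutions x(t; y, s) *)
  (X : R -> 'rV[R]_d -> R -> 'rV[R]_d)
  (hX : forall y s, `]a, b[%classic s -> U y ->
     pws_solution `]a, b[%classic U g fp fm (fun t => X t y s) /\ X s y s = y)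
  (hXback : forall y s, `]a, b[%classic s -> Ssurf U g y ->
     \forall t \near s^'-, Uminus U g (X t y s))
  (* Lipschitz continuity in the initial data *)
  (hLip : exists L : R, forall t s y1 y2, `]a, b[%classic t -> `]a, b[%classic s -> U y1 -> U y2 ->
     `|X t y1 s - X t y2 s| <= L * `|y1 - y2|)
  (* the point (t_star, x_star) in I x S *)
  (ts : R) (xs : 'rV[R]_d) (hts : `]a, b[%classic ts) (hxs : Ssurf U g xs) :
  exists eps : R, 0 < eps /\
    let K := closed_ball xs eps `&` Ssurf U g in
    let J := [set p : R * R | p.1 \in `[ts - eps, ts] /\ p.2 \in `[ts - eps, ts]
                               /\ p.1 < p.2] in
    (forall y t s, K y -> J (t, s) ->
       forall tau, ts - eps <= tau < s -> ~ Ssurf U g (X tau y s)) /\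
    let M := ((1/2)%:E * ereal_sup
               [set z | exists t s y, [/\ J (t, s), K y &
                  z = (`| second_deriv_g g (fun u => X u y s) t |)%:E]])%E in
    forall y t s, K y -> J (t, s) ->
      (Order.max (ts - eps - s)%:E (- (alphaS ^+ 2)%:E / M) < (t - s)%:E)%E ->
      t - s < 0 ->
      g (X t y s) < 0.
Proof.
move: hts; rewrite /= in_itv /= => /andP[ats tsb].
have tsI : `]a, b[%classic ts by rewrite /= in_itv /= ats tsb.
have [Uxs gxs] := hxs.
have [Oo [F [hOo hOin hC1 hFeq]]] := hfm.
have p0O : Oo (ts, xs) by apply: hOin => //; right.
have [Fc _ _] := hC1 (ts, xs) p0O.
have gcont : forall x, U x -> {for x, continuous g}.
  by move=> x Ux; have [] := hg x Ux.
have [_ gd _] := hg xs Uxs.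
pose A : 'I_d -> R := fun k => F (ts, xs) ord0 k.
pose B : 'I_d -> R := fun k => 'D_(ev k) g xs.
have a2 : 0 < alphaS ^+ 2 by rewrite lt0r sqr_ge0 andbT expf_neq0.
have hsum : alphaS ^+ 2 <= \sum_(k < d) B k * A k.
  have := (htrans ts xs tsI hxs).2.
  rewrite -hFeq //; last by right.
  by rewrite /dotv; under eq_bigr do rewrite mxE.
have [eta eta0 hpos] := @pos_sum R d A B _ a2 hsum.
have [d1 d10 Hd1] : exists2 d1, 0 < d1 & forall t x, `|ts - t| < d1 ->
    `|xs - x| < d1 -> `|F (t, x) - F (ts, xs)| < eta.
  have H := cvgr_distC_lt _ _ Fc eta eta0.
  have /nbhs_ballP [e e0 He] := H (nbhs_filter _).
  exists e => // t x h1 h2.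
  by apply: He; rewrite -ball_normE /= prod_normE /= gt_max h1 h2.
have [d2 d20 Hd2] : exists2 d2, 0 < d2 & forall x, `|xs - x| < d2 ->
    U x /\ forall k, `|'D_(ev k) g x - B k| < eta.
  have hU : \forall x \near xs, U x by apply: open_nbhs_nbhs; split.
  have hB : \forall x \near xs, forall k, `|'D_(ev k) g x - B k| < eta.
    apply: (@filter_forall _ _ _ _ (nbhs_filter xs)) => k.
    by apply: (cvgr_distC_lt _ _ (gd k).2 eta eta0).
  have H : \forall x \near xs, U x /\ forall k, `|'D_(ev k) g x - B k| < eta.
    near=> x; split; [near: x; exact: hU | near: x; exact: hB].
  have /nbhs_ballP [e e0 He] := H.
  by exists e => // x hx; apply: He; rewrite -ball_normE /=.
pose r := Num.min d1 d2.
have r0 : 0 < r by rewrite lt_min d10 d20.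
have rd1 : r <= d1 by rewrite ge_min lexx.
have rd2 : r <= d2 by rewrite ge_min lexx orbT.
pose C := `|F (ts, xs)| + eta.
have C0 : 0 <= C by rewrite addr_ge0 // ltW.
have C20 : 0 < C + 2 by apply: lt_le_trans (_ : 0 < 2) _; rewrite ?lerDr.
pose eps := Num.min (r / (C + 2)) ((ts - a) / 2).
have eps0 : 0 < eps by rewrite lt_min divr_gt0 // divr_gt0 // subr_gt0.
have eps1 : eps <= r / (C + 2) by rewrite ge_min lexx.
have eps2 : eps <= (ts - a) / 2 by rewrite ge_min lexx orbT.
have aeps : a < ts - eps by lra.
have Cr : (C + 1) * eps < r.
  apply: le_lt_trans (_ : (C + 1) * (r / (C + 2)) < r).
    by apply: ler_wpM2l => //; rewrite addr_ge0.
  rewrite mulrA ltr_pdivrMr //; nra.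
have epsr : eps < r.
  have : 0 <= C * eps := mulr_ge0 C0 (ltW eps0).
  move: Cr; rewrite mulrDl mul1r; lra.
have hFA t x k : ts - eps <= t <= ts -> `|xs - x| < r ->
    `|F (t, x) ord0 k - A k| <= eta /\ `|F (t, x) ord0 k| <= C.
  move=> /andP[t1 t2] hx.
  have h1 : `|ts - t| < d1.
    rewrite ger0_norm ?subr_ge0 //; lra.
  have hF := Hd1 t x h1 (lt_le_trans hx rd1).
  split.
    apply: (le_trans _ (ltW hF)); rewrite /A.
    by have := entry_dist (F (t, x)) (F (ts, xs)) k.
  apply: (le_trans (@mxnorm_entry R 1 d (F (t, x)) ord0 k)).
  have := ler_normD (F (ts, xs)) (F (t, x) - F (ts, xs)).
  rewrite [F (ts, xs) + _]addrC subrK /C; lra.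
have hgU x : `|xs - x| < r -> U x.
  by move=> hx; have [] := Hd2 x (lt_le_trans hx rd2).
have hgB x k : `|xs - x| < r ->
    [/\ U x, derivable g x (ev k), {for x, continuous g} &
        `|'D_(ev k) g x - B k| <= eta].
  move=> hx; have [Ux hk] := Hd2 x (lt_le_trans hx rd2).
  have [_ dd _] := hg x Ux.
  by split => //; [exact: (dd k).1 | exact: gcont | exact: ltW].
have hF t x : `]a, b[%classic t -> Uminus U g x -> F (t, x) = fm t x.
  by move=> tI hm; apply: hFeq => //; left.
have hcore := @core R d a b U g fp fm F X ts xs eps r C eta A B hX hXback gcont hF
  eps0 aeps tsb C0 Cr hFA hgU hgB hpos.
exists eps; split; first exact: eps0.
split.
  move=> y t s [Ky [Uy gy]] [t1 [s1 ts_]] tau /andP[tau1 tau2] [_ gtau].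
  move: Ky; rewrite closed_ballE // /closed_ball_ /= => hy.
  move: t1 s1; rewrite !in_itv /= => /andP[t1 t2] /andP[s1 s2].
  have := hcore y s hy Uy gy (ltac:(apply/andP; split; lra)) tau
    (ltac:(apply/andP; split; lra)).
  by rewrite gtau ltxx.
move=> y t s [Ky [Uy gy]] [t1 [s1 ts_]] _ _.
move: Ky; rewrite closed_ballE // /closed_ball_ /= => hy.
move: t1 s1; rewrite !in_itv /= => /andP[t1 t2] /andP[s1 s2].
have hs : ts - eps < s <= ts by apply/andP; split; lra.
have ht : ts - eps <= t < s by apply/andP; split; lra.
exact: (hcore y s hy Uy gy hs t ht).
Unshelve. all: by end_near.
Qed.
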